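(* For $n\ge 0$ let $P_n$ denote the path graph on $n$ vertices ($P_0$ is the empty graph, $P_1$ a single vertex, and for $n\ge 2$ a tree with exactly $n-2$ vertices of degree $2$). Then, as formal power series in $x$, $$\sum_{n\ge 0} \mathrm{sa}(P_n;t)\, x^n = \frac{-1+2tx+\sqrt{1+4x^2}}{2tx-2(t^2-1)x^2}.$$
   Context: All graphs are finite, simple and undirected. For a graph $G=(V,E)$ and $V'\subseteq V$, $G|_{V'}$ denotes the induced subgraph on $V'$. The signed a-number $\mathrm{sa}(G)$ is defined recursively: $\mathrm{sa}(G)=1$ if $G$ is the empty graph (no vertices); $\mathrm{sa}(G)=0$ if $G$ has a connected component with an odd number of vertices; otherwise $\mathrm{sa}(G)=-\sum_{V'\subsetneq V}\mathrm{sa}(G|_{V'})$. The signed a-polynomial of $G$ is $\mathrm{sa}(G;t)=\sum_{V'\subseteq V}\mathrm{sa}(G|_{V'})\,t^{|V\setminus V'|}$. *)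

(* Defs.v *)
From HB Require Import structures.
From mathcomp Require Import all_boot all_order all_algebra.
Set Implicit Arguments. Unset Strict Implicit. Unset Printing Implicit Defensive.
Import GRing.Theory Num.Theory.
Local Open Scope ring_scope.

(* A finite simple graph on a finType T is a symmetric irreflexive relation e.
   Induced subgraphs G|_{V'} are represented by the vertex set V' : {set T}. *)


Definition induced_rel (T : finType) (e : rel T) (S : {set T}) : rel T :=
  [rel x y | [&& x \in S, y \in S & e x y]].

Definition comp_of (T : finType) (e : rel T) (S : {set T}) (x : T) : {set T} :=
  [set y in S | connect (induced_rel e S) x y].

Definition has_odd_comp (T : finType) (e : rel T) (S : {set T}) : bool :=
  [exists x in S, odd #|comp_of e S x|].

(* signed a-number, by recursion with fuel (fuel >= #|S|). *)
Fixpoint sa_aux (T : finType) (e : rel T) (k : nat) (S : {set T}) : int :=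
  match k with
  | 0%N => 1
  | k'.+1 =>
      if S == set0 then 1
      else if has_odd_comp e S then 0
      else - \sum_(S' : {set T} | S' \proper S) sa_aux e k' S'
  end.

Definition sa (T : finType) (e : rel T) (S : {set T}) : int := sa_aux e #|S| S.

Definition sa_poly (T : finType) (e : rel T) : {poly int} :=
  \sum_(S : {set T}) (sa e S)%:P * 'X^(#|T| - #|S|).

Definition path_rel (n : nat) : rel 'I_n :=
  fun i j : 'I_n => ((i : nat).+1 == j) || ((j : nat).+1 == i).

(* formal power series in x with coefficients in Z[t], as coefficient sequences *)
Definition fps := nat -> {poly int}.

Definition fps_mul (f g : fps) : fps :=
  fun n => \sum_(i < n.+1) f i * g (n - i)%N.

Definition path_sa_series : fps := fun n => sa_poly (@path_rel n).

Definition denom_series : fps := fun n =>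
  if n == 1%N then 2%:P * 'X
  else if n == 2%N then - (2%:P * ('X ^+ 2 - 1))
  else 0.

Definition one_plus_4x2 : fps := fun n =>
  if n == 0%N then 1 else if n == 2%N then 4%:P else 0.

(* numerator -1 + 2tx + s(x), where s = sqrt(1+4x^2) *)
Definition numer_series (s : fps) : fps := fun n =>
  (if n == 0%N then -1 else if n == 1%N then 2%:P * 'X else 0) + s n.

(* Main.v *)
Require Import Defs.
From mathcomp Require Import all_boot all_order all_algebra.
From mathcomp Require Import zify ring lra.
From Stdlib Require Import FunctionalExtensionality.
Set Implicit Arguments. Unset Strict Implicit. Unset Printing Implicit Defensive.
Import GRing.Theory Num.Theory.
Local Open Scope ring_scope.

Fixpoint cf (k n : nat) : int :=
  if k is k'.+1 then
    (if n is n'.+1 then - \sum_(i < n') cf k' i * cf k' (n'.-1 - i) else 1)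
  else 0.

Definition cc (n : nat) : int := cf n.+1 n.

Lemma cf_stable k1 k2 n : (n < k1)%N -> (n < k2)%N -> cf k1 n = cf k2 n.
Proof.
elim: k1 k2 n => [|k1 IH] [|k2] n //= h1 h2.
case: n h1 h2 => [|n] h1 h2 //; congr (- _); apply: eq_bigr => i _.
have hi := ltn_ord i.
by rewrite (IH k2) ?(IH k2 (n.-1 - i)%N) //; lia.
Qed.

Lemma cc0 : cc 0 = 1. Proof. by []. Qed.

Lemma cf_S k n : cf k.+1 n.+1 = - \sum_(i < n) cf k i * cf k (n.-1 - i).
Proof. by []. Qed.

Lemma cc_rec n : cc n.+1 = - \sum_(i < n) cc i * cc (n.-1 - i).
Proof.
rewrite {1}/cc cf_S; congr (- _); apply: eq_bigr => i _.
have hi := ltn_ord i.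
rewrite /cc (@cf_stable n.+1 i.+1) ?(@cf_stable n.+1 (n.-1 - i).+1) //; lia.
Qed.

Lemma cc_odd n : odd n -> cc n = 0.
Proof.
elim/ltn_ind: n => [[|n] IH] //= hn.
rewrite cc_rec big1 ?oppr0 // => i _.
have hi := ltn_ord i.
case: (boolP (odd i)) => hoi; first by rewrite IH ?mul0r //; lia.
rewrite (IH (n.-1 - i)%N) ?mulr0 //; first lia.
move: hn hoi hi; case: n {IH} i => [|n] i /=; first by case: i.
move=> hn hoi hi; rewrite oddB; last lia.
by rewrite (negbTE hoi) addbF; move: hn; rewrite negbK.
Qed.

Fixpoint gw (k : nat) (w : seq bool) : int :=
  match w with
  | [::] => cc k
  | b :: w' => if b then gw k.+1 w' else cc k * gw 0 w'
  end.

Fixpoint subbits (w : seq bool) : seq (seq bool) :=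
  match w with
  | [::] => [:: [::]]
  | b :: w' => (if b then map (cons true) (subbits w') else [::])
                 ++ map (cons false) (subbits w')
  end.

Definition Hs (R : comNzRingType) (t : R) (k m : nat) : R :=
  \sum_(w <- subbits (nseq m true)) (gw k w)%:~R * t ^+ count negb w.

Lemma Hs0 (R : comNzRingType) (t : R) k : Hs t k 0 = (cc k)%:~R.
Proof. by rewrite /Hs /= big_seq1 /= expr0 mulr1. Qed.

Lemma HsS (R : comNzRingType) (t : R) k m :
  Hs t k m.+1 = Hs t k.+1 m + (cc k)%:~R * t * Hs t 0 m.
Proof.
rewrite /Hs /= big_cat !big_map /=; congr (_ + _).
rewrite mulr_sumr; apply: eq_bigr => w _.
by rewrite intrM exprS; ring.
Qed.

Lemma Hs_closed (R : comNzRingType) (t : R) m k :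
  Hs t k m = (cc (k + m))%:~R +
    t * \sum_(j < m) (cc (k + j))%:~R * Hs t 0 (m.-1 - j).
Proof.
elim: m k => [|m IH] k; first by rewrite Hs0 big_ord0 mulr0 addr0 addn0.
rewrite HsS IH big_ord_recl /= addn0 addSnnS subn0.
have E : \sum_(j < m) (cc (k.+1 + j))%:~R * Hs t 0 (m.-1 - j) =
  \sum_(i < m) (cc (k + bump 0 i))%:~R * Hs t 0 (m - bump 0 i) :> R.
  apply: eq_bigr => j _; rewrite /bump /= addSnnS add1n.
  by case: m {IH} j => [[]|m j] //; rewrite subSS.
rewrite E; ring.
Qed.

Lemma Q_S (R : comNzRingType) n : Hs (1 : R) 0 n.+1 = (cc n)%:~R.
Proof.
elim/ltn_ind: n => n IH.
rewrite Hs_closed big_ord_recr /= subnn Hs0 cc0 mul1r mulr1.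
rewrite cc_rec.
have E : \sum_(i < n) (cc (0 + i)%N)%:~R * Hs (1 : R) 0 (n - i)
   = \sum_(i < n) (cc i * cc (n.-1 - i))%:~R.
  apply: eq_bigr => i _ /=; rewrite intrM.
  have hi := ltn_ord i.
  have -> : (n - i = (n.-1 - i).+1)%N by lia.
  rewrite IH //; lia.
rewrite E rmorphN rmorph_sum /=; ring.
Qed.

Lemma gw_cat_false k u v : gw k (u ++ false :: v) = gw k u * gw 0 v.
Proof.
elim: u k => [|[] u IH] k //=; by rewrite IH // mulrA.
Qed.

Lemma gw_nseq0 k m : gw k (nseq m false) = cc k.
Proof. elim: m k => [|m IH] k //=; by rewrite IH cc0 mulr1. Qed.

Lemma gw_zeros_cat m w : gw 0 (nseq m false ++ w) = gw 0 w.
Proof. elim: m => [|m IH] //=; by rewrite IH cc0 mul1r. Qed.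

Lemma gw_ones k L : gw k (nseq L true) = cc (k + L).
Proof. elim: L k => [|L IH] k /=; by rewrite ?addn0 ?IH ?addSnnS. Qed.

Lemma gw_cat_zeros k u m : gw k (u ++ nseq m false) = gw k u.
Proof.
case: m => [|m]; first by rewrite cats0.
by rewrite /= gw_cat_false gw_nseq0 cc0 mulr1.
Qed.

Lemma sum_subbits_cat (R : zmodType) (F : seq bool -> R) u v :
  \sum_(w <- subbits (u ++ v)) F w =
  \sum_(x <- subbits u) \sum_(y <- subbits v) F (x ++ y).
Proof.
elim: u F => [|b u IH] F /=; first by rewrite big_seq1.
case: b; rewrite /= ?big_cat ?big_map ?IH //=.
Qed.

Lemma subbits_nseq_false m : subbits (nseq m false) = [:: nseq m false].
Proof. by elim: m => //= m ->. Qed.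

Lemma mem_subbits w u : (w \in subbits u) = all2 (fun x y => x ==> y) w u.
Proof.
elim: u w => [|b u IH] [|c w] //=.
- rewrite mem_cat; apply/negbTE; rewrite negb_or; apply/andP; split.
    by case: b => //=; apply/mapP => -[].
  by apply/mapP => -[].
- rewrite mem_cat; case: b; case: c => /=.
  all: rewrite ?mem_map ?in_nil ?orbF ?IH //; try (by move=> x y [->]).
  + case: (mapP) => [[x _ //]|]; by rewrite orbF.
  + by case: (mapP) => [[x _ //]|].
  + by apply/mapP => -[].
Qed.

Lemma uniq_subbits u : uniq (subbits u).
Proof.
elim: u => [|b u IH] //=.
have inj : forall c : bool, injective (cons c) by move=> c x y [->].
rewrite cat_uniq !map_inj_uniq //=; case: b => //=; rewrite ?map_inj_uniq // IH /= andbT.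
  by apply/hasP => -[x /mapP [y _ ->] /mapP [z _]].
by apply/hasP => -[x].
Qed.

Definition bits n (S : {set 'I_n}) : seq bool := [seq i \in S | i <- enum 'I_n].

Lemma size_bits n (S : {set 'I_n}) : size (bits S) = n.
Proof. by rewrite size_map size_enum_ord. Qed.

Lemma nth_bits n (S : {set 'I_n}) (i : 'I_n) : nth false (bits S) i = (i \in S).
Proof. by rewrite (nth_map i) ?size_enum_ord // nth_ord_enum. Qed.

Lemma bits_inj n : injective (@bits n).
Proof.
move=> S1 S2 h; apply/setP => i; by rewrite -!nth_bits h.
Qed.

Lemma bits_of n (w : seq bool) : size w = n ->
  bits [set i : 'I_n | nth false w i] = w.
Proof.
move=> hs; apply: (@eq_from_nth _ false); first by rewrite size_bits hs.
move=> i; rewrite size_bits => hi.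
by rewrite (nth_bits _ (Ordinal hi)) inE.
Qed.

Lemma card_bits n (S : {set 'I_n}) : #|S| = count id (bits S).
Proof. by rewrite count_map cardE enumT /enum_mem size_filter. Qed.

Lemma all2_map (T : Type) (r : rel bool) (f g : T -> bool) (s : seq T) :
  all2 r (map f s) (map g s) = all (fun x => r (f x) (g x)) s.
Proof. by elim: s => //= x s ->. Qed.

Lemma all2_size (r : rel bool) (s t : seq bool) : all2 r s t -> size s = size t.
Proof. by elim: s t => [|x s IH] [|y t] //= /andP [_ /IH ->]. Qed.

Lemma all2_bits n (S1 S2 : {set 'I_n}) :
  all2 (fun x y => x ==> y) (bits S1) (bits S2) = (S1 \subset S2).
Proof.
rewrite /bits all2_map; apply/allP/subsetP.
- by move=> h i hi; have := h i (mem_enum _ i); rewrite hi.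
- by move=> h i _; apply/implyP => /h.
Qed.

Lemma sum_sub (R : zmodType) n (S : {set 'I_n}) (F : seq bool -> R) :
  \sum_(S' : {set 'I_n} | S' \subset S) F (bits S') =
  \sum_(w <- subbits (bits S)) F w.
Proof.
rewrite -big_filter -(big_map (@bits n) xpredT) /=.
apply: perm_big; apply: uniq_perm.
- by rewrite map_inj_uniq ?filter_uniq // ?index_enum_uniq //; exact: bits_inj.
- exact: uniq_subbits.
move=> w; rewrite mem_subbits; apply/mapP/idP.
- by move=> [S' ]; rewrite mem_filter => /andP [h _] ->; rewrite all2_bits.
- move=> h; have hs : size w = n.
    by rewrite -(size_bits S); exact: (all2_size h).
  exists [set i : 'I_n | nth false w i]; last by rewrite bits_of.
  by rewrite mem_filter mem_index_enum andbT -all2_bits bits_of.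
Qed.

Section SaGen.
Variables (T : finType) (e : rel T).

Lemma sa_aux_stable k1 k2 (S : {set T}) :
  (#|S| <= k1)%N -> (#|S| <= k2)%N -> sa_aux e k1 S = sa_aux e k2 S.
Proof.
elim: k1 k2 S => [|k1 IH] [|k2] S //= h1 h2.
- by move: h1; rewrite leqn0 cards_eq0 => ->.
- by move: h2; rewrite leqn0 cards_eq0 => ->.
case: ifP => // _; case: ifP => // _; congr (- _); apply: eq_bigr => S' hS'.
have hc := proper_card hS'; apply: IH; lia.
Qed.

Lemma sa_unfold (S : {set T}) :
  sa e S = if S == set0 then 1 else if has_odd_comp e S then 0
           else - \sum_(S' : {set T} | S' \proper S) sa e S'.
Proof.
rewrite /sa; case: (boolP (S == set0)) => [/eqP -> | hS].
  by rewrite cards0.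
have : (0 < #|S|)%N by rewrite card_gt0.
case hc: #|S| => [|k] // _ /=; rewrite (negbTE hS); case: ifP => // _.
congr (- _); apply: eq_bigr => S' hS'.
have := proper_card hS'; rewrite hc => h.
apply: sa_aux_stable => //.
Qed.

Lemma sum_sub_split (R : zmodType) (S : {set T}) (F : {set T} -> R) :
  \sum_(S' : {set T} | S' \subset S) F S' =
  F S + \sum_(S' : {set T} | S' \proper S) F S'.
Proof.
rewrite (bigD1 S) //=; congr (_ + _); apply: eq_bigl => S'.
by rewrite properEneq andbC.
Qed.

Lemma sum_sa_even (S : {set T}) : S != set0 -> ~~ has_odd_comp e S ->
  \sum_(S' : {set T} | S' \subset S) sa e S' = 0.
Proof.
move=> h1 h2; rewrite sum_sub_split sa_unfold (negbTE h1) (negbTE h2).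
by rewrite addNr.
Qed.

End SaGen.

Section Comp.
Variables (T : finType) (e : rel T).

Lemma path_stay (S A : {set T}) :
  (forall x y, x \in A -> y \in S -> e x y -> y \in A) ->
  forall p x, x \in A -> path (induced_rel e S) x p ->
    path (induced_rel e A) x p && (last x p \in A).
Proof.
move=> hcl; elim=> [|y p IH] x hx //=.
case/andP=> /and3P [_ hy he] hp.
have hyA : y \in A by exact: hcl he.
have -> : induced_rel e A x y by rewrite /induced_rel /= hx hyA he.
by rewrite -andbA /=; exact: IH.
Qed.

Lemma comp_split (S A : {set T}) x :
  A \subset S ->
  (forall x y, x \in A -> y \in S -> e x y -> y \in A) ->
  x \in A -> comp_of e S x = comp_of e A x.
Proof.
move=> hsub hcl hx; apply/setP => y; rewrite !inE.
apply/andP/andP => -[hy hc].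
- move/connectP: hc => [p hp ->].
  by case/andP: (path_stay hcl hx hp) => hp' hl; split => //; apply/connectP; exists p.
- split; first exact: (subsetP hsub).
  apply: (connect_sub _ hc) => u v /and3P [hu hv he].
  by apply: connect1; rewrite /induced_rel /= (subsetP hsub _ hu) (subsetP hsub _ hv).
Qed.

Lemma odd_comp_split (S A B : {set T}) :
  S = A :|: B ->
  (forall x y, x \in A -> y \in S -> e x y -> y \in A) ->
  (forall x y, x \in B -> y \in S -> e x y -> y \in B) ->
  has_odd_comp e S = has_odd_comp e A || has_odd_comp e B.
Proof.
move=> hS hA hB.
have sA : A \subset S by rewrite hS subsetUl.
have sB : B \subset S by rewrite hS subsetUr.
apply/existsP/orP.
- move=> [x /andP [hx ho]]; move: hx; rewrite {1}hS inE => /orP [hx|hx].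
    by left; apply/existsP; exists x; rewrite hx -(comp_split sA hA hx).
  by right; apply/existsP; exists x; rewrite hx -(comp_split sB hB hx).
- move=> [] /existsP [x /andP [hx ho]]; exists x.
    by rewrite (subsetP sA _ hx) (comp_split sA hA hx).
  by rewrite (subsetP sB _ hx) (comp_split sB hB hx).
Qed.

End Comp.

Lemma nth_block a L c i :
  nth false (nseq a false ++ nseq L true ++ nseq c false) i = (a <= i < a + L)%N.
Proof.
rewrite nth_cat size_nseq; case: ltnP => h1.
  rewrite nth_nseq if_same; apply/esym/negbTE; lia.
rewrite nth_cat size_nseq; case: ltnP => h2.
  rewrite nth_nseq h2; apply/esym/andP; split; lia.
rewrite nth_nseq if_same; apply/esym/negbTE; lia.
Qed.

Lemma block_or_gap (w : seq bool) :
  (exists a L c, w = nseq a false ++ nseq L true ++ nseq c false) \/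
  (exists i j k, [/\ (i < j)%N, (j < k)%N, (k < size w)%N &
     [/\ nth false w i, ~~ nth false w j & nth false w k]]).
Proof.
elim: w => [|b w [[a [L [c ->]]] | [i [j [k [h1 h2 h3 [h4 h5 h6]]]]]]].
- by left; exists 0%N, 0%N, 0%N.
- case: b.
  + case: a => [|a].
      by left; exists 0%N, L.+1, c.
    case: L => [|L].
      by left; exists 0%N, 1%N, (a.+1 + c)%N; rewrite /= nseqD.
    right; exists 0%N, 1%N, a.+2; split => //=.
      rewrite size_cat /= size_cat !size_nseq; lia.
    by split => //; rewrite nth_cat size_nseq ltnn subnn.
  + by left; exists a.+1, L, c.
- by right; exists i.+1, j.+1, k.+1.
Qed.

Section PathGraph.
Variable n : nat.
Local Notation e := (@path_rel n).

Lemma ind_sym (S : {set 'I_n}) : symmetric (induced_rel e S).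
Proof.
move=> x y; rewrite /induced_rel /= /path_rel orbC.
by case: (x \in S); case: (y \in S).
Qed.

Lemma conn_up (S : {set 'I_n}) : forall d (x y : 'I_n), (y - x)%N = d -> (x <= y)%N ->
  (forall z : 'I_n, (x <= z <= y)%N -> z \in S) -> connect (induced_rel e S) x y.
Proof.
elim => [|d IH] x y hd hxy hz.
  have -> : x = y by apply: ord_inj; lia.
  exact: connect0.
have hx1 : (x.+1 < n)%N by have := ltn_ord y; lia.
pose x' := Ordinal hx1.
apply: (@connect_trans _ _ x').
  apply: connect1; rewrite /induced_rel /= !hz /path_rel ?eqxx //= ; lia.
apply: IH => /=; try lia.
move=> z hz'; apply: hz; lia.
Qed.

Lemma comp_full (S : {set 'I_n}) x : x \in S ->
  (forall a b z : 'I_n, a \in S -> b \in S -> (a <= z <= b)%N -> z \in S) ->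
  comp_of e S x = S.
Proof.
move=> hx hconv; apply/setP => y; rewrite inE.
case: (boolP (y \in S)) => //= hy.
case: (leqP x y) => h.
  by apply: (conn_up (erefl _) h) => z hz; exact: (hconv x y).
rewrite (sym_connect_sym (ind_sym S)).
apply: (conn_up (erefl _) (ltnW h)) => z hz; exact: (hconv y x).
Qed.

End PathGraph.

Lemma bits_set0 n : bits (set0 : {set 'I_n}) = nseq n false.
Proof.
apply: (@eq_from_nth _ false); first by rewrite size_bits size_nseq.
move=> i; rewrite size_bits => hi.
by rewrite (nth_bits _ (Ordinal hi)) inE nth_nseq hi.
Qed.

Lemma sum_Q L : \sum_(x <- subbits (nseq L.+1 true)) gw 0 x = cc L.
Proof.
have := @Q_S int L; rewrite /Hs => h.
transitivity ((cc L)%:~R : int); last exact: intz.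
rewrite -h; apply: eq_bigr => w _; rewrite expr1n mulr1; exact: (esym (intz _)).
Qed.

Lemma sa_path n (S : {set 'I_n}) : sa (@path_rel n) S = gw 0 (bits S).
Proof.
move: {2}#|S| (leqnn #|S|) => k; elim: k S => [|k IH] S hk.
  move: hk; rewrite leqn0 cards_eq0 => /eqP ->.
  by rewrite sa_unfold eqxx bits_set0 gw_nseq0.
rewrite sa_unfold; case: (boolP (S == set0)) => [/eqP ->|hS0].
  by rewrite bits_set0 gw_nseq0.
have IHp : forall S' : {set 'I_n}, S' \proper S -> sa (@path_rel n) S' = gw 0 (bits S').
  move=> S' hS'; apply: IH; have := proper_card hS'; lia.
case: (block_or_gap (bits S)) => [[a [L [c hb]]] | [i [j [k' [h1 h2 h3 [h4 h5 h6]]]]]].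
-
  have hcard : #|S| = L.
    by rewrite card_bits hb !count_cat !count_nseq /=; lia.
  have hmem : forall z : 'I_n, (z \in S) = (a <= z < a + L)%N.
    by move=> z; rewrite -nth_bits hb nth_block.
  have hconv : forall a' b' z : 'I_n, a' \in S -> b' \in S ->
      (a' <= z <= b')%N -> z \in S.
    move=> a' b' z; rewrite !hmem => /andP [? ?] /andP [? ?] /andP [? ?].
    apply/andP; split; lia.
  have [x0 hx0] : exists x, x \in S by apply/set0Pn.
  have hodd : has_odd_comp (@path_rel n) S = odd L.
    apply/existsP/idP.
      by move=> [x /andP [hx]]; rewrite comp_full // hcard.
    by move=> hL; exists x0; rewrite hx0 comp_full // hcard.
  have hgw : gw 0 (bits S) = cc L by rewrite hb gw_zeros_cat gw_cat_zeros gw_ones.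
  rewrite hodd hgw.
  have hL0 : (0 < L)%N by rewrite -hcard card_gt0.
  case: (boolP (odd L)) => hoL; first by rewrite cc_odd.
  have E : \sum_(S' : {set 'I_n} | S' \proper S) sa (@path_rel n) S' =
           \sum_(S' : {set 'I_n} | S' \proper S) gw 0 (bits S').
    by apply: eq_bigr => S' hS'; exact: IHp.
  rewrite E.
  have := sum_sub_split S (gw 0 \o (@bits n)) => /= hsplit.
  have htot : \sum_(S' : {set 'I_n} | S' \subset S) gw 0 (bits S') = 0.
    rewrite sum_sub hb sum_subbits_cat subbits_nseq_false big_seq1.
    rewrite sum_subbits_cat.
    have -> : \sum_(x <- subbits (nseq L true))
        \sum_(y <- subbits (nseq c false)) gw 0 (nseq a false ++ x ++ y) =
        \sum_(x <- subbits (nseq L true)) gw 0 x.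
      apply: eq_bigr => x _; rewrite subbits_nseq_false big_seq1.
      by rewrite gw_zeros_cat gw_cat_zeros.
    case: L hL0 hoL {hcard hmem hodd hgw hb E hsplit} => [//|L] _ hoL.
    by rewrite sum_Q cc_odd //; move: hoL => /= /negbNE.
  move: hsplit; rewrite htot hgw => /eqP; rewrite eq_sym addr_eq0 => /eqP ->.
  by [].
-
  rewrite size_bits in h3.
  have hjn : (j < n)%N by lia.
  have hin : (i < n)%N by lia.
  pose z := Ordinal hjn; pose xi := Ordinal hin; pose xk := Ordinal h3.
  have hzS : z \notin S by rewrite -(nth_bits S z).
  have hxi : xi \in S by rewrite -(nth_bits S xi).
  have hxk : xk \in S by rewrite -(nth_bits S xk).
  pose A := [set x in S | (x < j)%N]; pose B := [set x in S | (j < x)%N].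
  have hSAB : S = A :|: B.
    apply/setP => x; rewrite !inE; case: (boolP (x \in S)) => //= hx.
    have : x != z by apply: contraNneq hzS => <-.
    rewrite -val_eqE /= => hne; lia.
  have hclA : forall x y, x \in A -> y \in S -> @path_rel n x y -> y \in A.
    move=> x y; rewrite !inE /path_rel => /andP [_ hx] hy /orP [] /eqP hxy;
    rewrite hy /=; last lia.
    have : y != z by apply: contraNneq hzS => <-.
    rewrite -val_eqE /= => hne; lia.
  have hclB : forall x y, x \in B -> y \in S -> @path_rel n x y -> y \in B.
    move=> x y; rewrite !inE /path_rel => /andP [_ hx] hy /orP [] /eqP hxy;
    rewrite hy /=; first lia.
    have : y != z by apply: contraNneq hzS => <-.
    rewrite -val_eqE /= => hne; lia.
  have hApr : A \proper S.
    rewrite properE; apply/andP; split; first by rewrite hSAB subsetUl.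
    apply/subsetPn; exists xk => //; rewrite inE /= negb_and; apply/orP; right; lia.
  have hBpr : B \proper S.
    rewrite properE; apply/andP; split; first by rewrite hSAB subsetUr.
    apply/subsetPn; exists xi => //; rewrite inE /= negb_and; apply/orP; right; lia.
  have hA0 : A != set0 by apply/set0Pn; exists xi; rewrite inE hxi /=.
  have hB0 : B != set0 by apply/set0Pn; exists xk; rewrite inE hxk /=.
  pose u := take j (bits S); pose v := drop j.+1 (bits S).
  have hbS : bits S = u ++ false :: v.
    rewrite /u /v -(negbTE h5) -drop_nth ?size_bits //; exact: (esym (cat_take_drop _ _)).
  have hbA : bits A = u ++ nseq (n - j) false.
    apply: (@eq_from_nth _ false).
      by rewrite size_bits size_cat size_take size_bits size_nseq hjn subnKC // ltnW.
    move=> x; rewrite size_bits => hx; rewrite (nth_bits _ (Ordinal hx)) inE /=.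
    rewrite nth_cat size_take size_bits hjn; case: ltnP => hxj.
      by rewrite nth_take // (nth_bits _ (Ordinal hx)) andbT.
    by rewrite nth_nseq if_same andbF.
  have hbB : bits B = nseq j.+1 false ++ v.
    apply: (@eq_from_nth _ false).
      by rewrite size_bits size_cat size_drop size_bits size_nseq subnKC.
    move=> x; rewrite size_bits => hx; rewrite nth_cat size_nseq.
    rewrite (nth_bits _ (Ordinal hx)) inE /=; case: (ltnP x j.+1) => hxj.
      by rewrite (_ : false :: nseq j false = nseq j.+1 false) // nth_nseq if_same andbF.
    rewrite /v nth_drop subnKC //.
    by rewrite (nth_bits _ (Ordinal hx)) andbT.
  have hgS : gw 0 (bits S) = gw 0 u * gw 0 v by rewrite hbS gw_cat_false.
  have hgA : gw 0 (bits A) = gw 0 u by rewrite hbA gw_cat_zeros.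
  have hgB : gw 0 (bits B) = gw 0 v by rewrite hbB gw_zeros_cat.
  rewrite (odd_comp_split hSAB hclA hclB) hgS.
  case: (boolP (has_odd_comp (@path_rel n) A)) => hoA /=.
    have := IHp A hApr; rewrite sa_unfold (negbTE hA0) hoA hgA => <-.
    by rewrite mul0r.
  case: (boolP (has_odd_comp (@path_rel n) B)) => hoB /=.
    have := IHp B hBpr; rewrite sa_unfold (negbTE hB0) hoB hgB => <-.
    by rewrite mulr0.
  have hsumA : \sum_(x <- subbits u) gw 0 x = 0.
    rewrite -[RHS](sum_sa_even hA0 hoA).
    have -> : \sum_(S' : {set 'I_n} | S' \subset A) sa (@path_rel n) S' =
              \sum_(S' : {set 'I_n} | S' \subset A) gw 0 (bits S').
      apply: eq_bigr => S' hS'; apply: IHp.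
      exact: (sub_proper_trans hS' hApr).
    rewrite sum_sub hbA sum_subbits_cat; apply: eq_bigr => x _.
    by rewrite subbits_nseq_false big_seq1 gw_cat_zeros.
  have htot : \sum_(S' : {set 'I_n} | S' \subset S) gw 0 (bits S') = 0.
    rewrite sum_sub hbS sum_subbits_cat /=.
    have -> : \sum_(x <- subbits u) \sum_(y <- [seq false :: i | i <- subbits v])
        gw 0 (x ++ y) = \sum_(x <- subbits u) gw 0 x * \sum_(y <- subbits v) gw 0 y.
      apply: eq_bigr => x _; rewrite big_map mulr_sumr.
      by apply: eq_bigr => y _; rewrite gw_cat_false.
    by rewrite -mulr_suml hsumA mul0r.
  have E : \sum_(S' : {set 'I_n} | S' \proper S) sa (@path_rel n) S' =
           \sum_(S' : {set 'I_n} | S' \proper S) gw 0 (bits S').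
    by apply: eq_bigr => S' hS'; exact: IHp.
  rewrite E.
  have := sum_sub_split S (gw 0 \o (@bits n)) => /= hsplit.
  move: hsplit; rewrite htot hgS => /eqP; rewrite eq_sym addr_eq0 => /eqP ->.
  by [].
Qed.

Lemma intr_polyC (z : int) : (z%:~R : {poly int}) = z%:P.
Proof. by rewrite -{2}[z]intz rmorph_int. Qed.

Lemma bits_setT n : bits [set: 'I_n] = nseq n true.
Proof.
apply: (@eq_from_nth _ false); first by rewrite size_bits size_nseq.
move=> i; rewrite size_bits => hi.
by rewrite (nth_bits _ (Ordinal hi)) inE nth_nseq hi.
Qed.

Lemma sa_poly_path n : sa_poly (@path_rel n) = Hs ('X : {poly int}) 0 n.
Proof.
rewrite /sa_poly /Hs card_ord.
have -> : \sum_(S : {set 'I_n}) (sa (@path_rel n) S)%:P * 'X^(n - #|S|) =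
  \sum_(S : {set 'I_n} | S \subset setT)
     (fun w => (gw 0 w)%:~R * 'X ^+ count negb w) (bits S).
  apply: eq_big => [S|S _]; first by rewrite subsetT.
  rewrite /= intr_polyC sa_path card_bits; congr (_ * _).
  have h := count_predC id (bits S); rewrite size_bits in h.
  by rewrite -{1}h addKn.
by rewrite (sum_sub [set: 'I_n] (fun w : seq bool => ((gw 0 w)%:~R : {poly int}) * 'X ^+ count negb w)) bits_setT.
Qed.

Notation R2 := {poly {poly int}}.
Definition tr (N : nat) (f : fps) : R2 := \poly_(i < N) f i.
Definition cong0 (N : nat) (x : R2) := forall i, (i < N)%N -> x`_i = 0.

Lemma coef_tr N f i : (i < N)%N -> (tr N f)`_i = f i.
Proof. by move=> h; rewrite coef_poly h. Qed.

Lemma cong0D N x y : cong0 N x -> cong0 N y -> cong0 N (x + y).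
Proof. by move=> hx hy i hi; rewrite coefD hx ?hy ?addr0. Qed.

Lemma cong0N N x : cong0 N x -> cong0 N (- x).
Proof. by move=> hx i hi; rewrite coefN hx ?oppr0. Qed.

Lemma cong0B N x y : cong0 N x -> cong0 N y -> cong0 N (x - y).
Proof. by move=> hx hy; apply: cong0D => //; exact: cong0N. Qed.

Lemma cong0Ml N x y : cong0 N x -> cong0 N (y * x).
Proof.
move=> hx i hi; rewrite coefM big1 // => j _; rewrite hx ?mulr0 //.
have := ltn_ord j; lia.
Qed.

Lemma cong0_eq N x y : x = y -> cong0 N y -> cong0 N x.
Proof. by move=> ->. Qed.

Lemma cong0_cancel N z w : cong0 N (z * w) -> w`_0 != 0 -> cong0 N z.
Proof.
move=> hzw hw0; elim/ltn_ind => i IH hi.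
have := hzw i hi; rewrite coefMr big_ord_recl /= subn0.
rewrite big1 ?addr0 => [/eqP|j _].
  by rewrite mulf_eq0 (negbTE hw0) orbF => /eqP.
rewrite IH ?mul0r //; rewrite /bump /=; have := ltn_ord j; lia.
Qed.

Lemma tr_mul N f g : cong0 N (tr N (fps_mul f g) - tr N f * tr N g).
Proof.
move=> i hi; rewrite coefB coef_tr // coefM /fps_mul; apply/eqP; rewrite subr_eq0; apply/eqP.
apply: eq_bigr => j _; rewrite !coef_tr //; have := ltn_ord j; lia.
Qed.

Notation TT := ((('X : {poly int})%:P) : R2).
Notation XX := ('X : R2).
Definition pc : fps := fun i => (cc i)%:P.

Lemma E1 N : cong0 N ((1 - TT * XX * tr N pc) * tr N path_sa_series - tr N pc).
Proof.
move=> i hi.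
have -> : (1 - TT * XX * tr N pc) * tr N path_sa_series - tr N pc =
   tr N path_sa_series - tr N pc - TT * (XX * (tr N pc * tr N path_sa_series)) by ring.
rewrite !coefB coefCM coefXM !coef_tr // /path_sa_series /pc sa_poly_path.
rewrite Hs_closed add0n intr_polyC.
case: i hi => [|i] hi /=.
  by rewrite big_ord0 !mulr0 addr0 subrr subr0.
suff -> : (tr N pc * tr N path_sa_series)`_i =
  \sum_(j < i.+1) (cc (0 + j))%:~R * Hs 'X 0 (i - j).
  by rewrite [_ + _ * _]addrC addrK subrr.
rewrite coefM; apply: eq_bigr => j _; have := ltn_ord j => hj.
rewrite !coef_tr /pc /path_sa_series; try lia.
by rewrite sa_poly_path intr_polyC.
Qed.

Lemma E2 N : cong0 N (XX ^+ 2 * (tr N pc * tr N pc) + tr N pc - 1).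
Proof.
move=> i hi; rewrite coefB coefD coefXnM coef1 coef_tr // /pc.
case: i hi => [|[|m]] hi /=.
- by rewrite add0r cc0 subrr.
- by rewrite cc_rec big_ord0 oppr0 add0r subr0.
rewrite subr0 cc_rec rmorphN rmorph_sum coefM subn2 /=.
apply/eqP; rewrite subr_eq0; apply/eqP.
apply: eq_bigr => j _; have := ltn_ord j => hj.
rewrite !coef_tr ?rmorphM //; lia.
Qed.

Lemma E_o N : cong0 N (tr N one_plus_4x2 - (1 + (4%:P)%:P * XX ^+ 2)).
Proof.
move=> i hi; rewrite coefB coefD coef1 coefCM coefXn coef_tr // /one_plus_4x2.
by case: i hi => [|[|[|m]]] hi /=; ring.
Qed.

Lemma E_d N : cong0 N (tr N denom_series -
  ((2%:P * 'X)%:P * XX + (- (2%:P * ('X^2 - 1)))%:P * XX ^+ 2)).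
Proof.
move=> i hi; rewrite coefB coefD !coefCM coefX coefXn coef_tr // /denom_series.
by case: i hi => [|[|[|m]]] hi /=; ring.
Qed.

Lemma E_n N s : cong0 N (tr N (numer_series s) -
  (-1 + (2%:P * 'X)%:P * XX + tr N s)).
Proof.
move=> i hi; rewrite coefB !coefD coefN coef1 coefCM coefX !coef_tr // /numer_series.
by case: i hi => [|[|m]] hi /=; ring.
Qed.

Lemma conv1 : ((2%:P * 'X : {poly int})%:P : R2) = 2 * TT.
Proof. by rewrite rmorphM /= !polyC_natr. Qed.

Lemma conv2 : ((- (2%:P * ('X^2 - 1)) : {poly int})%:P : R2) = - (2 * (TT ^+ 2 - 1)).
Proof. by rewrite rmorphN rmorphM rmorphB rmorphXn /= rmorph1 !polyC_natr. Qed.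

Lemma conv4 : (((4%:P : {poly int}))%:P : R2) = 4.
Proof. by rewrite !polyC_natr. Qed.

Unset Implicit Arguments.

Theorem mainTheorem1 :
  forall s : fps, s 0%N = 1 -> fps_mul s s = one_plus_4x2 ->
  fps_mul path_sa_series denom_series = numer_series s.
Proof.
move=> s hs0 hss; apply: functional_extensionality => n.
pose N := n.+1.
pose a := tr N path_sa_series; pose p := tr N pc; pose sp := tr N s.
pose dd := tr N denom_series.
pose d0 : R2 := 2 * TT * XX - 2 * (TT ^+ 2 - 1) * XX ^+ 2.
pose nu0 : R2 := -1 + 2 * TT * XX + sp.
have e1 : cong0 N ((1 - TT * XX * p) * a - p) by exact: E1.
have e2 : cong0 N (XX ^+ 2 * (p * p) + p - 1) by exact: E2.
have e3 : cong0 N (sp * sp - (1 + 4 * XX ^+ 2)).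
  apply: (cong0_eq (y := (tr N (fps_mul s s) - (1 + 4 * XX ^+ 2)) -
                         (tr N (fps_mul s s) - sp * sp))); first ring.
  apply: cong0B; last exact: tr_mul.
  by rewrite hss -conv4; exact: E_o.
have ed : cong0 N (dd - d0).
  have -> : d0 = (2%:P * 'X)%:P * XX + (- (2%:P * ('X^2 - 1)))%:P * XX ^+ 2.
    by rewrite conv1 conv2 /d0; ring.
  exact: E_d.
have en : cong0 N (tr N (numer_series s) - nu0).
  have -> : nu0 = -1 + (2%:P * 'X)%:P * XX + tr N s by rewrite conv1.
  exact: E_n.
pose F := sp - (XX ^+ 2 * (2 * p) + 1).
have eF : cong0 N F.
  apply: (@cong0_cancel _ _ (sp + (XX ^+ 2 * (2 * p) + 1))).
    apply: (cong0_eq (y := (sp * sp - (1 + 4 * XX ^+ 2)) -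
                           4 * XX ^+ 2 * (XX ^+ 2 * (p * p) + p - 1))).
      rewrite /F; ring.
    by apply: cong0B => //; exact: cong0Ml.
  rewrite !coefD coefXnM coef1 /sp coef_tr // hs0 /=.
  by rewrite add0r -mulr2n -polyC_natr polyC_eq0.
pose G := a * d0 - nu0.
have eG : cong0 N G.
  apply: (@cong0_cancel _ _ (1 - TT * XX * p)).
    apply: (cong0_eq (y := d0 * ((1 - TT * XX * p) * a - p) +
             2 * TT * XX * (XX ^+ 2 * (p * p) + p - 1) - F * (1 - TT * XX * p))).
      rewrite /G /F /nu0 /d0; ring.
    apply: cong0B; first apply: cong0D; try exact: cong0Ml.
    by rewrite mulrC; exact: cong0Ml.
  rewrite coefB coef1 -mulrA coefCM coefXM /= mulr0 subr0; exact: oner_neq0.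
have hm := @tr_mul N path_sa_series denom_series.
have hfin : cong0 N (tr N (fps_mul path_sa_series denom_series) - tr N (numer_series s)).
  apply: (cong0_eq (y := (tr N (fps_mul path_sa_series denom_series) - a * dd)
      + a * (dd - d0) + G - (tr N (numer_series s) - nu0))).
    rewrite /G; ring.
  apply: cong0B => //; apply: cong0D => //; apply: cong0D => //; exact: cong0Ml.
have := hfin n (ltnSn n); rewrite coefB !coef_tr // => /eqP; rewrite subr_eq0 => /eqP.
done.
Qed.
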